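(* For any $n\ge 1$, the $h$-polynomial of $(\mathsf{Tr}(n),\preccurlyeq)$ is $$\mathrm{d}_{\mathsf{Tr}(n)}(1,y)=(y+1)^{n-2}\left(y^2+(n+1)y+1\right).$$
   Context: A triword of size $n$ is a word $u=u_1\cdots u_n$ with $u_i\in\{0,1,2\}$, $u_1\ne 2$, and such that $u_i=0$ implies $u_j\neq 1$ for all $j>i$; $\mathsf{Tr}(n)$ is their set, ordered componentwise ($u\preccurlyeq v$ iff $u_i\le v_i$ for all $i$). For a finite poset $\mathcal{P}$, its degree polynomial is $\mathrm{d}_{\mathcal{P}}(x,y)=\sum_{u\in\mathcal{P}}x^{\mathrm{in}(u)}y^{\mathrm{out}(u)}$, where $\mathrm{in}(u)$ (resp. $\mathrm{out}(u)$) is the number of elements covered by (resp. covering) $u$; its $h$-polynomial is $\mathrm{d}_{\mathcal{P}}(1,y)$. (For $n=1$ the formula is read as the rational expression, equal to $y+1$.) *)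

(* Defs.v *)
From HB Require Import structures.
From mathcomp Require Import all_boot all_order all_algebra.
Set Implicit Arguments. Unset Strict Implicit. Unset Printing Implicit Defensive.
Import GRing.Theory.

(* A word of size n over {0,1,2}: u_i is u (i-1) (0-indexed positions). *)
Definition word (n : nat) := {ffun 'I_n -> 'I_3}.

Definition is_triword (n : nat) (u : word n) : bool :=
  [forall i : 'I_n, (val i == 0%N) ==> (val (u i) != 2%N)] &&
  [forall i : 'I_n, forall j : 'I_n,
     ((i < j)%N && (val (u i) == 0%N)) ==> (val (u j) != 1%N)].

Definition wle (n : nat) (u v : word n) : bool :=
  [forall i : 'I_n, (val (u i) <= val (v i))%N].
Definition wlt (n : nat) (u v : word n) : bool := (u != v) && wle u v.

Definition tr_covers (n : nat) (u v : word n) : bool :=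
  [&& is_triword u, is_triword v, wlt u v &
      [forall w : word n, ~~ [&& is_triword w, wlt u w & wlt w v]]].

Definition tr_out (n : nat) (u : word n) : nat :=
  #|[set v : word n | tr_covers u v]|.

Definition tr_in (n : nat) (u : word n) : nat :=
  #|[set v : word n | tr_covers v u]|.

(* h-polynomial d_{Tr(n)}(1,y) = sum_{u in Tr(n)} 1^{in(u)} y^{out(u)} *)
Definition tr_hpoly (n : nat) : {poly int} :=
  \sum_(u : word n | is_triword u) (1 ^+ tr_in u * 'X ^+ tr_out u).

(* Main.v *)
Require Import Defs.
From HB Require Import structures.
From mathcomp Require Import all_boot all_order all_algebra.
From mathcomp Require Import zify ring.
Import GRing.Theory.
Set Implicit Arguments. Unset Strict Implicit.

Definition ext n (u : word n) (c : 'I_3) : word n.+1 :=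
  [ffun i => if unlift ord_max i is Some j then u j else c].

Lemma widen_lift n (j : 'I_n) : widen_ord (leqnSn n) j = lift ord_max j.
Proof. by apply: val_inj; rewrite /= /bump leqNgt ltn_ord. Qed.

Lemma ext_lift n (u : word n) c j : ext u c (lift ord_max j) = u j.
Proof. by rewrite /ext ffunE liftK. Qed.

Lemma ext_max n (u : word n) c : ext u c ord_max = c.
Proof. by rewrite /ext ffunE unlift_none. Qed.

Lemma ordS_case n (i : 'I_n.+1) : i = ord_max \/ exists j, i = lift ord_max j.
Proof. by case: (unliftP ord_max i) => [j ->|->]; [right; exists j | left]. Qed.

Lemma forall_recr n (P : pred 'I_n.+1) :
  [forall i, P i] = [forall j : 'I_n, P (lift ord_max j)] && P ord_max.
Proof.
apply/forallP/andP => [H | [/forallP H1 H2] i].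
  by split; [apply/forallP => j|]; apply: H.
by case: (ordS_case i) => [->|[j ->]].
Qed.

Lemma exists_recr n (P : pred 'I_n.+1) :
  [exists i, P i] = [exists j : 'I_n, P (lift ord_max j)] || P ord_max.
Proof.
apply/existsP/orP => [[i Hi] | [/existsP [j Hj]|H]].
  by case: (ordS_case i) => [E|[j E]]; subst i; [right | left; apply/existsP; exists j].
  by exists (lift ord_max j).
by exists ord_max.
Qed.

Lemma sum_ext (R : nmodType) n (F : word n.+1 -> R) :
  (\sum_(v : word n.+1) F v = \sum_(u : word n) \sum_(c : 'I_3) F (ext u c))%R.
Proof.
rewrite pair_big /=.
rewrite (reindex (fun p : word n * 'I_3 => ext p.1 p.2)) //.
exists (fun v : word n.+1 => ([ffun j => v (lift ord_max j)], v ord_max)).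
  move=> [u c] _ /=; congr pair; last by rewrite ext_max.
  by apply/ffunP => j; rewrite ffunE ext_lift.
move=> v _ /=; apply/ffunP => i.
by case: (ordS_case i) => [->|[j ->]]; rewrite ?ext_max ?ext_lift ?ffunE.
Qed.

Definition hz n (u : word n) : bool := [exists i, val (u i) == 0%N].
Definition bst (k x : nat) : bool := (x != 2%N) && ~~((k == 0%N) && (x == 1%N)).
Definition ost n (u : word n) : nat := (\sum_(i < n) bst i (u i))%N.

Lemma vlift n (j : 'I_n) : val (lift ord_max j) = val j.
Proof. by rewrite /= /bump leqNgt ltn_ord. Qed.

Lemma vlift2 n (j : 'I_n) : nat_of_ord (lift ord_max j) = nat_of_ord j.
Proof. exact: vlift. Qed.

Lemma tw_ext n (u : word n) c :
  is_triword (ext u c) =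
  [&& is_triword u, ~~(hz u && (val c == 1%N)) & (n != 0%N) || (val c != 2%N)].
Proof.
apply/idP/idP.
  case/andP => /forallP H1 /forallP H2.
  apply/and3P; split.
  - apply/andP; split; apply/forallP => i.
      by have := H1 (lift ord_max i); rewrite vlift ext_lift.
    apply/forallP => j; have /forallP := H2 (lift ord_max i).
    by move/(_ (lift ord_max j)); rewrite !vlift !ext_lift.
  - apply/negP => /andP [/existsP [j Hj] Hc].
    have /forallP := H2 (lift ord_max j); move/(_ ord_max).
    by rewrite vlift ext_lift ext_max /= ltn_ord Hj Hc.
  - case: n u H1 H2 => [|n] u H1 H2 //=.
    by have := H1 ord_max; rewrite ext_max.
case/and3P => /andP [/forallP H1 /forallP H2] Hz Hn.
apply/andP; split; apply/forallP => i.
  case: (ordS_case i) => [->|[j ->]]; last by rewrite vlift ext_lift.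
  rewrite ext_max /=; apply/implyP => /eqP E; subst n; done.
apply/forallP => k.
case: (ordS_case i) => [->|[j ->]]; case: (ordS_case k) => [->|[l ->]].
- by rewrite ltnn.
- by rewrite vlift /= ltnNge (ltnW (ltn_ord l)).
- rewrite vlift ext_lift ext_max /=; apply/implyP => /andP [_ Hj].
  apply/negP => Hc; move: Hz; rewrite Hc andbT => /negP; apply.
  by rewrite /hz; apply/existsP; exists j.
- by rewrite !vlift !ext_lift; have /forallP := H2 j; apply.
Qed.

Lemma hz_ext n (u : word n) c : hz (ext u c) = hz u || (val c == 0%N).
Proof.
rewrite /hz exists_recr ext_max; congr orb.
by apply: eq_existsb => j; rewrite ext_lift.
Qed.

Lemma ost_ext n (u : word n) c :
  ost (ext u c) = (ost u + bst n c)%N.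
Proof.
rewrite /ost big_ord_recr /= ext_max; congr addn.
by apply: eq_bigr => j _; by rewrite widen_lift ext_lift.
Qed.

Definition fz n (u : word n) (i : 'I_n) : bool :=
  [forall j : 'I_n, (j < i)%N ==> (val (u j) != 0%N)].
Definition one3 : 'I_3 := @Ordinal 3 1 isT.
Definition two3 : 'I_3 := @Ordinal 3 2 isT.
Definition upd n (u : word n) (i : 'I_n) : word n :=
  [ffun j => if j == i then (if (val (u i) == 0%N) && fz u i then one3 else two3) else u j].
Definition Iset n (u : word n) : {set 'I_n} := [set i : 'I_n | bst (val i) (val (u i))].

Lemma upd_val n (u : word n) i j :
  val (upd u i j) = if j == i then (if (val (u i) == 0%N) && fz u i then 1%N else 2%N)
                    else val (u j).
Proof. by rewrite /upd ffunE; case: (j == i); case: ((val (u i) == 0%N) && fz u i). Qed.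

Lemma lt3 n (u : word n) i : (val (u i) < 3)%N.
Proof. exact: ltn_ord. Qed.
Lemma vE k (x : 'I_k) : val x = nat_of_ord x.
Proof. by []. Qed.
Ltac nlia := (repeat match goal with H : is_true _ |- _ => revert H | H : _ = _ |- _ => revert H | H : ~ _ |- _ => revert H end); rewrite ?vE; intros; lia.

Lemma upd_tw n (u : word n) i : is_triword u -> i \in Iset u -> is_triword (upd u i).
Proof.
case/andP => /forallP H1 /forallP H2; rewrite inE /bst => Hb.
apply/andP; split; apply/forallP => k.
  rewrite upd_val; case: (k =P i) => [->|_]; last exact: H1.
  apply/implyP => Hi0.
  have -> : fz u i by apply/forallP => j; rewrite (eqP Hi0) ltn0.
  move: Hb; rewrite Hi0 /=; have L3 := lt3 u i; case: ifP => // HH; nlia.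
apply/forallP => l; rewrite !upd_val.
case: (k =P i) => [->|/eqP Hki]; first by case: ifP => _; rewrite andbF.
case: (l =P i) => [->|/eqP Hli]; last by have /forallP := H2 k; apply.
apply/implyP => /andP [Hk Hu]; case: ifP => //= /andP [_ /forallP /(_ k)].
by rewrite Hk Hu.
Qed.

Lemma upd_lt n (u : word n) i : i \in Iset u -> wlt u (upd u i).
Proof.
rewrite inE /bst => Hb; apply/andP; split.
  apply/negP => /eqP E; have := congr1 (fun w : word n => val (w i)) E.
  rewrite /= upd_val eqxx; move: Hb; have := lt3 u i.
  case: ifP => [/andP [H0 _]|_]; nlia.
apply/forallP => j; rewrite upd_val; case: (j =P i) => [->|//].
have := lt3 u i; case: ifP => [/andP [H0 _]|_] //; nlia.
Qed.

Lemma upd_cov n (u : word n) i :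
  is_triword u -> i \in Iset u -> tr_covers u (upd u i).
Proof.
move=> Tu Hi; rewrite /tr_covers Tu upd_tw // upd_lt //=.
apply/forallP => w; apply/negP => /and3P [Tw /andP [Nuw /forallP Luw] /andP [Nwv /forallP Lwv]].
have Eq j : j != i -> val (w j) = val (u j).
  move=> Hj; have := Luw j; have := Lwv j; rewrite upd_val (negPf Hj); nlia.
have Ni : val (w i) != val (u i).
  apply/negP => /eqP E; move/negP: Nuw; apply; apply/eqP/ffunP => j; apply: val_inj.
  by case: (j =P i) => [->|/eqP Hj]; [rewrite E | rewrite Eq].
have Nv : val (w i) != val (upd u i i).
  apply/negP => /eqP E; move/negP: Nwv; apply; apply/eqP/ffunP => j; apply: val_inj.
  case: (j =P i) => [->|/eqP Hj]; [by rewrite E | by rewrite Eq // upd_val (negPf Hj)].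
have L1 := Luw i; have L2 := Lwv i.
move: Nv L2; rewrite upd_val eqxx; case: ifP => [/andP [/eqP Hu0 _]|Hc].
  by move: Ni L1; rewrite Hu0; nlia.
move=> Nv L2.
have Hu0 : val (u i) = 0%N.
  move: Hi; rewrite inE /bst => /andP [Hu2 _]; move: Ni L1 Nv L2 Hu2; have := lt3 u i; have := lt3 w i; nlia.
have Hw1 : val (w i) = 1%N by move: Ni L1 Nv L2; rewrite Hu0; have := lt3 w i; nlia.
move: Hc; rewrite Hu0 eqxx /= => /negbT /forallPn [j]; rewrite negb_imply negbK => /andP [Hji /eqP Huj].
have Hj : j != i by apply/negP => /eqP E; move: Hji; rewrite E ltnn.
case/andP: Tw => _ /forallP /(_ j) /forallP /(_ i).
by rewrite Hji Eq // Huj Hw1.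
Qed.

Lemma cov_upd n (u v : word n) : tr_covers u v -> exists2 i, i \in Iset u & v = upd u i.
Proof.
case/and4P => Tu Tv /andP [Nuv /forallP Luv] /forallP Hcov.
have [i0 Hi0] : exists i0, (val (u i0) < val (v i0))%N.
  case: (boolP [exists i0, (val (u i0) < val (v i0))%N]) => [/existsP //|Hn].
  exfalso; move/negP: Nuv; apply; apply/eqP/ffunP => j.
  have Hj : ~~ (val (u j) < val (v j))%N by apply/negP => Hj; move/negP: Hn; apply; apply/existsP; exists j.
  apply: val_inj; move: Hj; have := Luv j; nlia.
case: (@arg_minnP _ i0 (fun i : 'I_n => (val (u i) < val (v i))%N) (fun i : 'I_n => val i) Hi0) => i Hi Hmin.
have HI : i \in Iset u.
  rewrite inE /bst; apply/andP; split.
    by move: Hi; have := lt3 v i; nlia.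
  apply/negP => /andP [/eqP Hi00 /eqP Hu1].
  case/andP: Tv => /forallP /(_ i); rewrite Hi00 /= => Hv2 _.
  by move: Hi Hv2; rewrite Hu1; have := lt3 v i; nlia.
exists i => //.
have Le : wle (upd u i) v.
  apply/forallP => j; rewrite upd_val; case: (j =P i) => [->|_]; last exact: Luv.
  case: ifP => [_|Hc]; first by move: Hi; nlia.
  move: HI; rewrite inE /bst => /andP [Hu2 _].
  case Hu1: (val (u i) == 1%N); first by move: Hi Hu1; have := lt3 v i; nlia.
  have Hu0 : val (u i) = 0%N by move: Hu1 Hu2; have := lt3 u i; nlia.
  move: Hc; rewrite Hu0 eqxx /= => /negbT /forallPn [m]; rewrite negb_imply negbK => /andP [Hji /eqP Huj].
  have Hvj : val (v m) = 0%N.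
    have := Luv m; rewrite Huj; case Hl: (val (v m)) => [//|k] _.
    have := Hmin m; rewrite Huj Hl /= => /(_ isT); move: Hji; nlia.
  case/andP: Tv => _ /forallP /(_ m) /forallP /(_ i); rewrite Hji Hvj /=.
  by move: Hi; rewrite Hu0; have := lt3 v i; nlia.
have := Hcov (upd u i); rewrite upd_tw // upd_lt //= /wlt Le andbT negbK => /eqP.
by [].
Qed.

Lemma tr_out_card n (u : word n) : is_triword u -> tr_out u = #|Iset u|.
Proof.
move=> Tu; rewrite /tr_out.
have -> : [set v | tr_covers u v] = [set upd u i | i in Iset u].
  apply/setP => v; rewrite inE; apply/idP/imsetP.
    by move/cov_upd.
  by case=> i Hi ->; apply: upd_cov.
rewrite card_in_imset // => i j Hi Hj E.
apply/eqP; apply/negP => /negP Nij.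
have := congr1 (fun w : word n => val (w i)) E; rewrite /= !upd_val eqxx (negPf Nij).
move: Hi; rewrite inE /bst; have := lt3 u i.
case: ifP => [/andP [H0 _]|_]; nlia.
Qed.

Lemma card_ost n (u : word n) : #|Iset u| = ost u.
Proof.
rewrite /ost -sum1_card big_mkcond /=; apply: eq_bigr => i _.
by rewrite inE; case: (bst i (u i)).
Qed.

Local Open Scope ring_scope.

Definition T n : {poly int} := \sum_(u : word n) (if is_triword u then 'X^(ost u) else 0).
Definition Bs n : {poly int} :=
  \sum_(u : word n) (if is_triword u && ~~ hz u then 'X^(ost u) else 0).

Lemma hpoly_T n : tr_hpoly n = T n.
Proof.
rewrite /tr_hpoly /T big_mkcond /=; apply: eq_bigr => u _.
case Tu: (is_triword u) => //.
by rewrite expr1n mul1r tr_out_card // card_ost.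
Qed.

Lemma T_S n : T n.+1 = 'X * T n + (if n is 0 then Bs n else 'X * Bs n + T n).
Proof.
rewrite /T sum_ext; case: n => [|m]; rewrite /Bs ?mulr_sumr -?big_split /=;
  apply: eq_bigr => u _; rewrite !big_ord_recl big_ord0 !tw_ext !ost_ext /bst /=;
  case: (is_triword u); case: (hz u); rewrite /= ?addn0 ?addn1 ?exprS ?mulr0 ?addr0 ?add0r //; ring.
Qed.

Lemma B_S n : Bs n.+1 = (if n is 0 then Bs n else ('X + 1) * Bs n).
Proof.
rewrite /Bs sum_ext; case: n => [|m]; rewrite ?mulr_sumr /=;
  apply: eq_bigr => u _; rewrite !big_ord_recl big_ord0 !tw_ext !hz_ext !ost_ext /bst /=;
  case: (is_triword u); case: (hz u); rewrite /= ?addn0 ?addn1 ?exprS ?mulr0 ?addr0 ?add0r //; ring.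
Qed.

Definition u0 : word 0 := [ffun i : 'I_0 => one3].

Lemma sum_word0 (F : word 0 -> {poly int}) : \sum_(u : word 0) F u = F u0.
Proof.
rewrite (big_pred1 u0) // => u /=; apply/esym/eqP/ffunP; case => ? H; by [].
Qed.

Lemma T0 : T 0 = 1.
Proof.
rewrite /T sum_word0.
have -> : is_triword u0 by apply/andP; split; apply/forallP => -[].
by rewrite /ost big_ord0 expr0.
Qed.

Lemma B0 : Bs 0 = 1.
Proof.
rewrite /Bs sum_word0.
have -> : is_triword u0 by apply/andP; split; apply/forallP => -[].
have -> : hz u0 = false by apply/existsP => -[[]].
by rewrite /ost big_ord0 expr0.
Qed.

Lemma Bval m : Bs m.+1 = ('X + 1) ^+ m.
Proof.
elim: m => [|m IH]; first by rewrite B_S B0 expr0.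
by rewrite B_S IH exprS.
Qed.

Lemma T1 : T 1 = 'X + 1.
Proof. by rewrite T_S T0 B0 mulr1. Qed.

Lemma Tval m : ('X + 1) ^+ 2 * T m.+1 =
  ('X + 1) ^+ m.+1 * ('X ^+ 2 + (m.+2)%:R *: 'X + 1).
Proof.
rewrite -mul_polyC.
elim: m => [|m IH].
  rewrite T1; rewrite polyC_natr; ring.
rewrite T_S Bval.
have E : ('X + 1) ^+ 2 * ('X * T m.+1 + ('X * ('X + 1) ^+ m + T m.+1)) =
   ('X + 1) * (('X + 1) ^+ 2 * T m.+1) + 'X * ('X + 1) ^+ m.+2 by rewrite !exprS; ring.
rewrite E IH !polyC_natr !exprS; ring.
Qed.

Theorem proposition3p3 (n : nat) (hn : (1 <= n)%N) :
  (('X + 1) ^+ 2 * tr_hpoly n =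
     ('X + 1) ^+ n * ('X ^+ 2 + (n.+1)%:R *: 'X + 1) :> {poly int}) /\
  ((2 <= n)%N ->
     tr_hpoly n = ('X + 1) ^+ (n - 2) * ('X ^+ 2 + (n.+1)%:R *: 'X + 1)) /\
  (n = 1%N -> tr_hpoly n = 'X + 1).
Proof.
case: n hn => [//|m] _.
have H1 := Tval m.
rewrite hpoly_T; split => //; split; last by case=> ->; rewrite T1.
case: m H1 => [//|m] H1 _.
have Hnz : ('X + 1) ^+ 2 != 0 :> {poly int}.
  by rewrite expf_neq0 // -size_poly_eq0 -[1]/(1%:P) size_XaddC.
apply: (mulfI Hnz); rewrite H1 subn2 /= mulrA -exprD.
by [].
Qed.
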